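(* Let $0<E<F$ and $h(z)=1-(1-z)^3$. For $x>F/2$ define $$\rho(x)=\frac{\min\{h(z):z\in[E/x,F/x]\}}{\max\{h(z):z\in[E/x,F/x]\}} .$$ Then $\rho$ attains its maximum over $x\in(F/2,\infty)$ at $$x=\frac13(E+F)+\frac13\sqrt{\tfrac12(E^2+F^2)+\tfrac12(F-E)^2}.$$
   Context: Interpretation: in the dual-window iteration $\gamma_{k+1}=3\gamma_k-3S_kg+SS_k\gamma_k$ (with $S$, $S_k$ the frame operators of $(g,a,b)$, $(\gamma_k,a,b)$), the operators $Z_k=(SS_k)^{1/2}$ satisfy $Z_{k+1}=h(Z_k)$; if $Z_0=S$ has spectrum $[E,F]$ and is rescaled to $S/x$, $\rho(x)$ is the ratio of the minimum to the maximum of the spectrum after one step. *)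

(* Defs.v *)
From HB Require Import structures.
From mathcomp Require Import all_boot all_order all_algebra.
From mathcomp Require Import classical_sets reals.
Set Implicit Arguments. Unset Strict Implicit. Unset Printing Implicit Defensive.
Import Order.TTheory GRing.Theory Num.Theory.
Local Open Scope classical_set_scope.
Local Open Scope ring_scope.

Definition h_fun (R : realType) (z : R) : R := 1 - (1 - z) ^+ 3.

Definition h_image (R : realType) (a b : R) : set R :=
  [set h_fun z | z in [set z : R | a <= z <= b]].

(* rho(x) = min{h(z) : z in [E/x,F/x]} / max{h(z) : z in [E/x,F/x]};
   h is continuous, so min/max over the compact interval are inf/sup. *)
Definition rho (R : realType) (E F x : R) : R :=
  inf (h_image (E / x) (F / x)) / sup (h_image (E / x) (F / x)).

Definition x_opt (R : realType) (E F : R) : R :=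
  (E + F) / 3 + Num.sqrt ((E ^+ 2 + F ^+ 2) / 2 + (F - E) ^+ 2 / 2) / 3.

(* Main.v *)
Require Import Defs.
From HB Require Import structures.
From mathcomp Require Import all_boot all_order all_algebra.
From mathcomp Require Import classical_sets reals.
From mathcomp Require Import ring lra.
Import Order.TTheory GRing.Theory Num.Theory.
Local Open Scope ring_scope.

Section S.
Variable R : realType.

Lemma h_mono (a z : R) : a <= z -> h_fun a <= h_fun z.
Proof.
move=> az; rewrite /h_fun.
have e : (1 - (1 - z) ^+ 3) - (1 - (1 - a) ^+ 3) =
  (z - a) * ((1 - a + (1 - z) / 2) ^+ 2 + 3 / 4 * (1 - z) ^+ 2) by field.
rewrite -subr_ge0 e; apply: mulr_ge0; first by rewrite subr_ge0.
apply: addr_ge0; first exact: sqr_ge0.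
apply: mulr_ge0; [lra | exact: sqr_ge0].
Qed.

Lemma sup_img (a b : R) : a <= b -> sup (h_image a b) = h_fun b.
Proof.
move=> ab; apply/le_anti/andP; split.
  apply: ge_sup; first by exists (h_fun b); exists b => //=; rewrite ab lexx.
  by move=> y [z /= /andP[_ zb] <-]; apply: h_mono.
have hu : has_ubound (h_image a b).
  by exists (h_fun b) => y [z /= /andP[_ zb] <-]; apply: h_mono.
by apply: ub_le_sup => //; exists b => //=; rewrite ab lexx.
Qed.

Lemma inf_img (a b : R) : a <= b -> inf (h_image a b) = h_fun a.
Proof.
move=> ab; apply/le_anti/andP; split.
  have hl : has_lbound (h_image a b).
    by exists (h_fun a) => y [z /= /andP[az _] <-]; apply: h_mono.
  by apply: ge_inf => //; exists a => //=; rewrite ab lexx.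
apply: lb_le_inf; first by exists (h_fun a); exists a => //=; rewrite ab lexx.
by move=> y [z /= /andP[az _] <-]; apply: h_mono.
Qed.

Lemma rhoE (E F x : R) : 0 < E -> E < F -> 0 < x ->
  rho E F x = (E * (3 * x ^+ 2 - 3 * E * x + E ^+ 2)) /
              (F * (3 * x ^+ 2 - 3 * F * x + F ^+ 2)).
Proof.
move=> hE hEF hx.
have ab : E / x <= F / x by rewrite ler_pM2r ?invr_gt0 // ltW.
rewrite /rho sup_img // inf_img // /h_fun.
have Dp : 3 * x ^+ 2 - 3 * F * x + F ^+ 2 != 0.
  apply/lt0r_neq0.
  have -> : 3 * x ^+ 2 - 3 * F * x + F ^+ 2 = 3 * (x - F / 2) ^+ 2 + F ^+ 2 / 4 by field.
  apply: ltr_wpDl; first by apply: mulr_ge0 => //; exact: sqr_ge0.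
  by apply: divr_gt0 => //; apply: exprn_gt0; lra.
have Fn : F != 0 by apply/lt0r_neq0; lra.
have xn : x != 0 by apply/lt0r_neq0.
field; apply/and3P; split => //.
rewrite xn /=.
have -> : x ^+ 3 - (x - F) ^+ 3 = F * (3 * x ^+ 2 - 3 * F * x + F ^+ 2) by ring.
by rewrite mulf_neq0.
Qed.

End S.

Theorem mainTheorem13 (R : realType) (E F : R) (hE : 0 < E) (hEF : E < F) :
  F / 2 < x_opt E F /\
  (forall x : R, F / 2 < x -> rho E F x <= rho E F (x_opt E F)).
Proof.
pose r := Num.sqrt ((E ^+ 2 + F ^+ 2) / 2 + (F - E) ^+ 2 / 2).
have r0 : 0 <= r by apply: sqrtr_ge0.
have r2 : r ^+ 2 = E ^+ 2 - E * F + F ^+ 2.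
  rewrite sqr_sqrtr; first by field.
  apply: addr_ge0; apply: divr_ge0 => //; apply: addr_ge0 || exact: sqr_ge0;
    exact: sqr_ge0.
have rgt : F - E < r.
  rewrite -[r ^+ 2]/(r * r) in r2; nra.
have xoE : x_opt E F = (E + F + r) / 3 by rewrite /x_opt /r; field.
have hxo : F / 2 < x_opt E F by rewrite xoE; lra.
split => // x hx.
have x0 : 0 < x by lra.
rewrite !rhoE //; last by lra.
rewrite xoE.
set xo := (E + F + r) / 3.
set s := E + F.
have crit : 3 * xo ^+ 2 - 2 * s * xo - F ^+ 2 + s * F = 0.
  have -> : 3 * xo ^+ 2 - 2 * s * xo - F ^+ 2 + s * F =
     (r ^+ 2 - (E ^+ 2 - E * F + F ^+ 2)) / 3 by rewrite /xo /s; field.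
  by rewrite r2 subrr mul0r.
have Dpos : forall y : R, 0 < 3 * y ^+ 2 - 3 * F * y + F ^+ 2.
  move=> y; have -> : 3 * y ^+ 2 - 3 * F * y + F ^+ 2 = 3 * (y - F / 2) ^+ 2 + F ^+ 2 / 4 by field.
  apply: ltr_wpDl; first by apply: mulr_ge0 => //; exact: sqr_ge0.
  by apply: divr_gt0 => //; apply: exprn_gt0; lra.
have Fp : 0 < F by lra.
rewrite ler_pdivrMr; last by apply: mulr_gt0.
rewrite [X in _ <= X]mulrAC ler_pdivlMr; last by apply: mulr_gt0.
set Dx := 3 * x ^+ 2 - 3 * F * x + F ^+ 2.
set Do := 3 * xo ^+ 2 - 3 * F * xo + F ^+ 2.
have ro : 3 * xo - s = r by rewrite /xo /s; field.
have eDo : Do = (3 * xo - s) * (2 * xo - F).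
  apply/eqP; rewrite -subr_eq0.
  have -> : Do - (3 * xo - s) * (2 * xo - F) =
    - (3 * xo ^+ 2 - 2 * s * xo - F ^+ 2 + s * F) by rewrite /Do; ring.
  by rewrite crit oppr0.
have key : 0 <= (3 * xo - s) * Dx - (3 * x - s) * Do.
  have -> : (3 * xo - s) * Dx - (3 * x - s) * Do =
     (3 * xo - s) * (3 * (x - xo) ^+ 2).
    apply/eqP; rewrite -subr_eq0.
    have -> : (3 * xo - s) * Dx - (3 * x - s) * Do - (3 * xo - s) * (3 * (x - xo) ^+ 2)
      = - (3 * xo - s) * (3 * xo ^+ 2 - 2 * s * xo - F ^+ 2 + s * F)
      by rewrite eDo /Dx; ring.
    by rewrite crit mulr0.
  by rewrite ro; apply: mulr_ge0 => //; apply: mulr_ge0 => //; exact: sqr_ge0.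
rewrite -subr_ge0.
have -> : E * (3 * xo ^+ 2 - 3 * E * xo + E ^+ 2) * (F * Dx) -
    E * (3 * x ^+ 2 - 3 * E * x + E ^+ 2) * (F * Do) =
    E * F * (F - E) * ((3 * xo - s) * Dx - (3 * x - s) * Do)
  by rewrite /Dx /Do /s; ring.
apply: mulr_ge0 key; apply: mulr_ge0; [apply: mulr_ge0|]; lra.
Qed.
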